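(* Consider Algorithm 3 (described in the context) under the Standing Assumption and Matrix Assumption of the context, and suppose $\{\beta_k\}$ is chosen such that $\beta_k\bar\xi_k\bar\tau_k/(\bar\tau_kL+\Gamma)\in(0,1]$ for all $k\in\mathbb{N}$. Then for all $k\in\mathbb{N}$, $$\phi(x_k+\bar\alpha_k\bar d_k,\bar\tau_k)-\phi(x_k,\bar\tau_k)\le-\bar\alpha_k\Delta q(x_k,\bar\tau_k,g_k,H_k,d_k)+\tfrac12\bar\alpha_k\beta_k\Delta q(x_k,\bar\tau_k,\bar g_k,H_k,\bar d_k)+\bar\alpha_k\bar\tau_kg_k^T(\bar d_k-d_k).$$
   Context: Problem: $\min_x f(x)$ s.t. $c(x)=0$, $f(x)=\mathbb{E}[F(x,\omega)]$, $c:\mathbb{R}^n\to\mathbb{R}^m$ deterministic. Notation: $g_k=\nabla f(x_k)$, $c_k=c(x_k)$, $J_k=\nabla c(x_k)^T$; $\phi(x,\tau)=\tau f(x)+\|c(x)\|_1$; $\Delta q(x,\tau,g,H,d)=-\tau(g^Td+\frac12\max\{d^THd,0\})+\|c(x)\|_1$. Standing Assumption: an open convex set $\mathcal X$ contains all iterates; $f$ is $C^1$, bounded below on $\mathcal X$, $\nabla f$ bounded and $L$-Lipschitz on $\mathcal X$; $c$, $\nabla c^T$ bounded on $\mathcal X$; $\nabla c_i$ is $\gamma_i$-Lipschitz on $\mathcal X$; singular values of $\nabla c(x)^T$ bounded away from zero uniformly over $\mathcal X$; $\Gamma:=\sum_i\gamma_i$. Matrix Assumption: deterministic symmetric $H_k$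 with $\|H_k\|_2\le\kappa_H$ and $u^TH_ku\ge\zeta\|u\|_2^2$ whenever $J_ku=0$. Algorithm 3 (inputs $x_0$, $\bar\tau_{-1}>0$, $\epsilon,\sigma\in(0,1)$, $\bar\xi_{-1}>0$, $\{\beta_k\}\subset(0,1]$, $\theta\ge0$): at iteration $k$, obtain stochastic gradient $\bar g_k$; $(\bar d_k,\bar y_k)$ solves $H_k\bar d_k+J_k^T\bar y_k=-\bar g_k$, $J_k\bar d_k=-c_k$ (assumed $\bar d_k\neq0$). $\bar\tau_k^{trial}=\infty$ if $\bar g_k^T\bar d_k+\max\{\bar d_k^TH_k\bar d_k,0\}\le0$, else $\frac{(1-\sigma)\|c_k\|_1}{\bar g_k^T\bar d_k+\max\{\bar d_k^TH_k\bar d_k,0\}}$; $\bar\tau_k=\bar\tau_{k-1}$ if $\bar\tau_{k-1}\le\bar\tau_k^{trial}$, else $(1-\epsilon)\bar\tau_k^{trial}$. $\bar\xi_k^{trial}=\frac{\Delta q(x_k,\bar\tau_k,\bar g_k,H_k,\bar d_k)}{\bar\tau_k\|\bar d_k\|_2^2}$; $\bar\xi_k=\bar\xi_{k-1}$ if $\bar\xi_{k-1}\le\bar\xi_k^{trial}$, else $(1-\epsilon)\bar\xi_k^{trial}$. With $D_k=(\bar\tau_kL+\Gamma)\|\bar d_k\|_2^2$, $\hat a_k=\beta_k\Delta q(x_k,\bar\tau_k,\bar g_k,H_k,\bar d_k)/D_k$, $\tilde a_k=\hat a_k-4\|c_k\|_1/D_k$, project both onto $[a_k,a_k+\theta\beta_k^2]$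 with $a_k=\frac{\beta_k\bar\xi_k\bar\tau_k}{\bar\tau_kL+\Gamma}$ to get $\widehat\alpha_k,\widetilde\alpha_k$; $\bar\alpha_k=\widehat\alpha_k$ if $\widehat\alpha_k<1$, $1$ if $\widetilde\alpha_k\le1\le\widehat\alpha_k$, $\widetilde\alpha_k$ if $\widetilde\alpha_k>1$; $x_{k+1}=x_k+\bar\alpha_k\bar d_k$. Deterministic counterpart: $(d_k,y_k)$ solves $H_kd_k+J_k^Ty_k=-g_k$, $J_kd_k=-c_k$. *)

(* Defs.v *)
From HB Require Import structures.
From mathcomp Require Import all_boot all_order all_algebra.
From mathcomp Require Import all_classical all_reals all_analysis.
Set Implicit Arguments. Unset Strict Implicit. Unset Printing Implicit Defensive.
Import Order.TTheory GRing.Theory Num.Theory.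
Import numFieldNormedType.Exports.
Local Open Scope ring_scope.
Local Open Scope classical_set_scope.

Section Defs.
Variable R : realType.

Definition dotv n (u v : 'cV[R]_n) : R := \sum_i u i 0 * v i 0.
Definition norm2 n (u : 'cV[R]_n) : R := Num.sqrt (dotv u u).
Definition norm1 n (u : 'cV[R]_n) : R := \sum_i `|u i 0|.

Definition quad n (H : 'M[R]_n) (d : 'cV[R]_n) : R := dotv d (H *m d).

Definition convex_vset n (X : set 'cV[R]_n) : Prop :=
  forall u v t, X u -> X v -> 0 <= t <= 1 -> X ((1 - t) *: u + t *: v).

Definition merit n m (f : 'cV[R]_n -> R) (c : 'cV[R]_n -> 'cV[R]_m)
  (x : 'cV[R]_n) (tau : R) : R := tau * f x + norm1 (c x).

Definition dq n m (c : 'cV[R]_n -> 'cV[R]_m) (x : 'cV[R]_n) (tau : R)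
  (g : 'cV[R]_n) (H : 'M[R]_n) (d : 'cV[R]_n) : R :=
  - tau * (dotv g d + 2^-1 * Num.max (quad H d) 0) + norm1 (c x).

(* merit parameter update; the case "denominator <= 0" is tau^trial = +oo,
   in which case tau_{k-1} <= tau^trial and tau_k = tau_{k-1}. *)
Definition tau_update n m (eps sigma prev : R) (cx : 'cV[R]_m)
  (g : 'cV[R]_n) (H : 'M[R]_n) (d : 'cV[R]_n) : R :=
  let den := dotv g d + Num.max (quad H d) 0 in
  if den <= 0 then prev
  else let tr := (1 - sigma) * norm1 cx / den in
       if prev <= tr then prev else (1 - eps) * tr.

Definition xi_update (eps prev trial : R) : R :=
  if prev <= trial then prev else (1 - eps) * trial.

Definition proj_int (lo hi v : R) : R := Num.min (Num.max v lo) hi.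

Definition step_size n m (c : 'cV[R]_n -> 'cV[R]_m) (L Gam theta beta tau xi : R)
  (x : 'cV[R]_n) (g : 'cV[R]_n) (H : 'M[R]_n) (d : 'cV[R]_n) : R :=
  let D := (tau * L + Gam) * norm2 d ^+ 2 in
  let ah := beta * dq c x tau g H d / D in
  let atl := ah - 4 * norm1 (c x) / D in
  let a := beta * xi * tau / (tau * L + Gam) in
  let alh := proj_int a (a + theta * beta ^+ 2) ah in
  let alt := proj_int a (a + theta * beta ^+ 2) atl in
  if alh < 1 then alh
  else if alt <= 1 then 1
  else alt.

End Defs.

(* Main.v *)
Require Import Defs.
From HB Require Import structures.
From mathcomp Require Import all_boot all_order all_algebra.
From mathcomp Require Import all_classical all_reals all_analysis.
From mathcomp Require Import ring lra.
Import Order.TTheory GRing.Theory Num.Theory.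
Import numFieldNormedType.Exports.
Local Open Scope ring_scope.
Local Open Scope classical_set_scope.

Section Aux.
Variable R : realType.
Variable n : nat.
Implicit Types u v w : 'cV[R]_n.

Lemma dotv_ge0 u : 0 <= dotv u u.
Proof. by apply: sumr_ge0 => i _; rewrite -expr2 sqr_ge0. Qed.

Lemma norm2_ge0 u : 0 <= norm2 u.
Proof. exact: sqrtr_ge0. Qed.

Lemma norm2_sq u : norm2 u ^+ 2 = dotv u u.
Proof. by rewrite /norm2 sqr_sqrtr // dotv_ge0. Qed.

Lemma dotvBl u v w : dotv (u - v) w = dotv u w - dotv v w.
Proof. by rewrite /dotv -sumrB; apply: eq_bigr => i _; rewrite !mxE mulrBl. Qed.

Lemma dotvNl u w : dotv (- u) w = - dotv u w.
Proof. by rewrite /dotv -sumrN; apply: eq_bigr => i _; rewrite !mxE mulNr. Qed.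

Lemma dotvZ t u : dotv (t *: u) (t *: u) = t ^+ 2 * dotv u u.
Proof. by rewrite /dotv mulr_sumr; apply: eq_bigr => i _; rewrite !mxE; ring. Qed.

Lemma norm2Z t u : norm2 (t *: u) = `|t| * norm2 u.
Proof. by rewrite /norm2 dotvZ sqrtrM ?sqr_ge0 // sqrtr_sqr. Qed.

Lemma dotv_CS u v : dotv u v <= norm2 u * norm2 v.
Proof.
have A0 := norm2_ge0 u; have B0 := norm2_ge0 v.
have Au := norm2_sq u; have Bv := norm2_sq v.
suff : dotv u v ^+ 2 <= dotv u u * dotv v v.
  rewrite -Au -Bv => h.
  have AB0 : 0 <= norm2 u * norm2 v by apply: mulr_ge0.
  case: (lerP (dotv u v) (norm2 u * norm2 v)) => // lt.
  have : (norm2 u * norm2 v) * (norm2 u * norm2 v) < dotv u v * dotv u v.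
    by apply: (@le_lt_trans _ _ ((norm2 u * norm2 v) * dotv u v));
      [apply: ler_wpM2l => //; exact: ltW | rewrite ltr_pM2r //; exact: le_lt_trans lt].
  rewrite -!expr2 exprMn; lra.
have [v0|vpos] := eqVneq (dotv v v) 0.
  have vi : forall i, v i 0 = 0.
    have pos : forall j, predT j -> 0 <= v j 0 * v j 0.
      by move=> j _; rewrite -expr2 sqr_ge0.
    move=> i; have := psumr_eq0P pos v0 (isT : predT i).
    by move/eqP; rewrite mulf_eq0 orbb => /eqP.
  have -> : dotv u v = 0 by rewrite /dotv big1 // => i _; rewrite vi mulr0.
  by rewrite v0 expr0n mulr0.
have vp : 0 < dotv v v by rewrite lt_neqAle eq_sym vpos dotv_ge0.
set t := dotv u v / dotv v v.
have E : \sum_i (u i 0 - t * v i 0) ^+ 2 =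
   dotv u u - 2 * t * dotv u v + t ^+ 2 * dotv v v.
  rewrite /dotv !mulr_sumr -sumrB -big_split /=; apply: eq_bigr => i _; ring.
have : 0 <= \sum_i (u i 0 - t * v i 0) ^+ 2 by apply: sumr_ge0 => i _; exact: sqr_ge0.
rewrite E /t => h.
have h2 : 0 <= dotv v v * (dotv u u - 2 * (dotv u v / dotv v v) * dotv u v +
     (dotv u v / dotv v v) ^+ 2 * dotv v v) by apply: mulr_ge0 => //; exact: ltW.
have E2 : dotv v v * (dotv u u - 2 * (dotv u v / dotv v v) * dotv u v +
     (dotv u v / dotv v v) ^+ 2 * dotv v v) = dotv u u * dotv v v - dotv u v ^+ 2.
  by field; rewrite gt_eqF.
rewrite E2 in h2; lra.
Qed.


Lemma dotvN2 u : dotv (- u) (- u) = dotv u u.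
Proof. by rewrite /dotv; apply: eq_bigr => i _; rewrite !mxE mulrNN. Qed.

Lemma norm2N u : norm2 (- u) = norm2 u.
Proof. by rewrite /norm2 dotvN2. Qed.

Lemma dotv_absCS u v : `|dotv u v| <= norm2 u * norm2 v.
Proof.
rewrite ler_norml dotv_CS andbT.
have := dotv_CS (- u) v; rewrite dotvNl norm2N; lra.
Qed.

Lemma line_derive (phi : 'cV[R]_n -> R) x d t :
  derivable phi (x + t *: d) d ->
  is_derive t 1 (fun s => phi (x + s *: d)) (derive phi (x + t *: d) d).
Proof.
move=> dp.
set g := fun s => phi (x + s *: d).
have E : (fun h : R => h^-1 *: ((g \o shift t) (h *: 1) - g t)) =
         (fun h : R => h^-1 *: ((phi \o shift (x + t *: d)) (h *: d) - phi (x + t *: d))).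
  apply: funext => h /=; rewrite /g /shift /= -/(_ *: _).
  by rewrite [h *: 1]mulr1 scalerDl addrCA addrA.
have dg : derivable g t 1 by rewrite /derivable E.
have -> : derive phi (x + t *: d) d = derive g t 1 by rewrite /derive E.
exact: derivableP.
Qed.

Lemma descent (X : set 'cV[R]_n) (phi : 'cV[R]_n -> R) (G : 'cV[R]_n -> 'cV[R]_n)
  (K : R) x d a :
  (forall z, X z -> differentiable phi z /\ forall v, 'd phi z v = dotv (G z) v) ->
  (forall z w, X z -> X w -> norm2 (G z - G w) <= K * norm2 (z - w)) ->
  (forall t, 0 <= t <= a -> X (x + t *: d)) -> 0 <= a ->
  `|phi (x + a *: d) - phi x - a * dotv (G x) d| <= K / 2 * a ^+ 2 * norm2 d ^+ 2.
Proof.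
move=> Hd HL Hseg a0.
set A := dotv (G x) d; set B := norm2 d ^+ 2; set C := K / 2 * B.
set g := fun s => phi (x + s *: d).
have gd : forall t, 0 <= t <= a -> is_derive t 1 g (dotv (G (x + t *: d)) d).
  move=> t ht; have [df dfe] := Hd _ (Hseg t ht).
  apply: (is_derive_eq (line_derive _ _ _ _ (diff_derivable (v:=d) df))).
  by rewrite deriveE // dfe.
have bound : forall t, 0 <= t <= a -> `|dotv (G (x + t *: d)) d - A| <= K * t * B.
  move=> t ht; rewrite /A -dotvBl.
  apply: le_trans (dotv_absCS _ _) _.
  have X0 : X x by have := Hseg 0; rewrite scale0r addr0; apply; rewrite lexx.
  have := HL _ _ (Hseg t ht) X0.
  have -> : x + t *: d - x = t *: d by rewrite addrAC subrr add0r.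
  rewrite norm2Z.
  have -> : `|t| = t by apply/normr_idP; case/andP: ht.
  move=> h; rewrite /B expr2 mulrA.
  by apply: ler_wpM2r => //; [exact: norm2_ge0 | rewrite -mulrA].
have H1 : forall t, 0 <= t <= a -> is_derive t 1 (g - A \*: idfun - C \*: (idfun ^+ 2))
     (dotv (G (x + t *: d)) d - A - C * (2 * t)).
  move=> t ht; have := gd t ht => gdt.
  apply: is_derive_eq; rewrite /= expr1 /GRing.scale /=; ring.
have H2 : forall t, 0 <= t <= a -> is_derive t 1 (g - A \*: idfun + C \*: (idfun ^+ 2))
     (dotv (G (x + t *: d)) d - A + C * (2 * t)).
  move=> t ht; have := gd t ht => gdt.
  apply: is_derive_eq; rewrite /= expr1 /GRing.scale /=; ring.
have ioo : forall t, t \in `]0, a[%R -> 0 <= t <= a.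
  by move=> t; rewrite in_itv /= => /andP[h1 h2]; rewrite !ltW.
have icc : forall t, t \in `[0, a]%R -> 0 <= t <= a.
  by move=> t; rewrite in_itv /=.
have CE : forall t, C * (2 * t) = K * t * B by move=> t; rewrite /C; field.
have c1 : {within `[0, a], continuous (g - A \*: idfun - C \*: (idfun ^+ 2))}.
  apply: derivable_within_continuous => t /icc ht.
  exact: (@ex_derive _ _ _ _ _ _ _ (H1 t ht)).
have c2 : {within `[0, a], continuous (g - A \*: idfun + C \*: (idfun ^+ 2))}.
  apply: derivable_within_continuous => t /icc ht.
  exact: (@ex_derive _ _ _ _ _ _ _ (H2 t ht)).
have d1 : forall t, t \in `]0, a[%R -> (g - A \*: idfun - C \*: (idfun ^+ 2))^`() t <= 0.
  move=> t /ioo ht; rewrite derive1E.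
  have := H1 t ht => h; rewrite derive_val CE.
  have := bound t ht; rewrite ler_norml; lra.
have d2 : forall t, t \in `]0, a[%R -> 0 <= (g - A \*: idfun + C \*: (idfun ^+ 2))^`() t.
  move=> t /ioo ht; rewrite derive1E.
  have := H2 t ht => h; rewrite derive_val CE.
  have := bound t ht; rewrite ler_norml; lra.
have hu := ler0_derive1_nincr (fun t ht => @ex_derive _ _ _ _ _ _ _ (H1 t (ioo t ht))) d1 c1
   (lexx 0) a0 (lexx a).
have hl := ger0_derive1_ndecr (fun t ht => @ex_derive _ _ _ _ _ _ _ (H2 t (ioo t ht))) d2 c2
   (lexx 0) a0 (lexx a).
have e1 : (g - A \*: idfun - C \*: (idfun ^+ 2)) a = phi (x + a *: d) - A * a - C * a ^+ 2 by [].
have e2 : (g - A \*: idfun - C \*: (idfun ^+ 2)) 0 = phi (x + 0 *: d) - A * 0 - C * 0 ^+ 2 by [].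
have e3 : (g - A \*: idfun + C \*: (idfun ^+ 2)) a = phi (x + a *: d) - A * a + C * a ^+ 2 by [].
have e4 : (g - A \*: idfun + C \*: (idfun ^+ 2)) 0 = phi (x + 0 *: d) - A * 0 + C * 0 ^+ 2 by [].
rewrite e1 e2 in hu; rewrite e3 e4 in hl.
rewrite scale0r addr0 expr0n /= !mulr0 in hu hl.
have eC : C * a ^+ 2 = K / 2 * a ^+ 2 * B by rewrite /C; ring.
rewrite ler_norml -eC; apply/andP; split; lra.
Qed.


Lemma dotvBr u v w : dotv w (u - v) = dotv w u - dotv w v.
Proof. by rewrite /dotv -sumrB; apply: eq_bigr => i _; rewrite !mxE mulrBr. Qed.

Lemma dotv_row m (A : 'M[R]_(m, n)) i v : dotv (row i A)^T v = (A *m v) i 0.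
Proof. by rewrite /dotv !mxE; apply: eq_bigr => j _; rewrite !mxE. Qed.

Lemma norm1_ge0 m (u : 'cV[R]_m) : 0 <= norm1 u.
Proof. by apply: sumr_ge0 => i _. Qed.

Lemma tau_prop m (eps sigma prev : R) (cx : 'cV[R]_m) g (Hm : 'M[R]_n) d :
  0 <= prev -> 0 < eps < 1 -> 0 < sigma < 1 ->
  0 <= tau_update eps sigma prev cx g Hm d /\
  tau_update eps sigma prev cx g Hm d * (dotv g d + Num.max (quad Hm d) 0)
    <= (1 - sigma) * norm1 cx.
Proof.
move=> p0 /andP[e0 e1] /andP[s0 s1]; have c0 := norm1_ge0 _ cx.
rewrite /tau_update /=.
set den := dotv g d + _.
case: (lerP den 0) => hden.
  split=> //; apply: le_trans (_ : 0 <= _); last by apply: mulr_ge0; lra.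
  by rewrite mulr_ge0_le0.
have tr0 : 0 <= (1 - sigma) * norm1 cx / den.
  by apply: divr_ge0; [apply: mulr_ge0; lra | exact: ltW].
have trE : (1 - sigma) * norm1 cx / den * den = (1 - sigma) * norm1 cx.
  by rewrite mulrVK // unitfE gt_eqF.
case: ifP => hp.
  split=> //; rewrite -trE; apply: ler_wpM2r => //; exact: ltW.
split; first by apply: mulr_ge0 => //; lra.
rewrite -(mulrA (1 - eps)) trE.
have : 0 <= (1 - sigma) * norm1 cx by apply: mulr_ge0; lra.
nra.
Qed.

Lemma xi_prop (eps prev trial : R) :
  0 <= prev -> 0 < eps < 1 -> 0 <= trial ->
  0 <= xi_update eps prev trial /\ xi_update eps prev trial <= trial.
Proof.
move=> p0 /andP[e0 e1] t0; rewrite /xi_update; case: ifP => h; first by split.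
split; first by apply: mulr_ge0 => //; lra.
nra.
Qed.

Lemma proj_prop (lo hi v : R) : lo <= hi ->
  lo <= proj_int lo hi v /\ proj_int lo hi v <= Num.max v lo.
Proof.
move=> h; rewrite /proj_int; split.
  by rewrite le_min h le_max lexx orbT.
by rewrite ge_min lexx.
Qed.


Lemma dotv_gt0 u : u != 0 -> 0 < dotv u u.
Proof.
move=> u0; rewrite lt_neqAle dotv_ge0 andbT eq_sym; apply/negP => /eqP v0.
have pos : forall j, predT j -> 0 <= u j 0 * u j 0.
  by move=> j _; rewrite -expr2 sqr_ge0.
move/negP: u0; apply; apply/eqP/matrixP => i j; rewrite (ord1 j) !mxE.
have := psumr_eq0P pos v0 (isT : predT i).
by move/eqP; rewrite mulf_eq0 orbb => /eqP.
Qed.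

Lemma seg_in (X : set 'cV[R]_n) x d a :
  convex_vset X -> X x -> X (x + a *: d) -> 0 < a ->
  forall t, 0 <= t <= a -> X (x + t *: d).
Proof.
move=> cX Xx Xy a0 t /andP[t0 ta].
have s01 : 0 <= t / a <= 1.
  apply/andP; split; first by apply: divr_ge0 => //; exact: ltW.
  by rewrite ler_pdivrMr // mul1r.
have := cX _ _ (t / a) Xx Xy s01.
suff -> : (1 - t / a) *: x + t / a *: (x + a *: d) = x + t *: d by [].
rewrite scalerDr scalerA divfK ?gt_eqF // scalerBl scale1r.
by rewrite addrA subrK.
Qed.

End Aux.

Theorem lemma3p6 (R : realType) (n m : nat)
  (X : set 'cV[R]_n)
  (f : 'cV[R]_n -> R) (gradf : 'cV[R]_n -> 'cV[R]_n)
  (c : 'cV[R]_n -> 'cV[R]_m) (Jc : 'cV[R]_n -> 'M[R]_(m, n))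
  (L : R) (gam : 'I_m -> R)
  (H : nat -> 'M[R]_n) (kH zeta : R)
  (tau_m1 eps sigma xi_m1 theta : R) (beta : nat -> R)
  (x gb db d : nat -> 'cV[R]_n) (yb y : nat -> 'cV[R]_m)
  (taub xib alphab : nat -> R)
  (* Standing Assumption *)
  (HXopen : open X) (HXconv : convex_vset X) (HXit : forall k, X (x k))
  (Hfdiff : forall z, X z ->
     differentiable f z /\ forall v, 'd f z v = dotv (gradf z) v)
  (Hflb : exists lb, forall z, X z -> lb <= f z)
  (Hgbd : exists B, forall z, X z -> norm2 (gradf z) <= B)
  (HgL : forall z w, X z -> X w -> norm2 (gradf z - gradf w) <= L * norm2 (z - w))
  (Hcdiff : forall (i : 'I_m) z, X z ->
     differentiable (fun w => c w i 0) z /\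
     forall v, 'd (fun w => c w i 0) z v = (Jc z *m v) i 0)
  (Hcbd : exists B, forall z, X z -> norm2 (c z) <= B)
  (HJbd : exists B, forall z, X z -> forall v, norm2 (Jc z *m v) <= B * norm2 v)
  (HcL : forall (i : 'I_m) z w, X z -> X w ->
     norm2 ((row i (Jc z) - row i (Jc w))^T) <= gam i * norm2 (z - w))
  (Hsv : exists kap, 0 < kap /\
     forall z, X z -> forall u : 'cV[R]_m, kap * norm2 u <= norm2 ((Jc z)^T *m u))
  (* Matrix Assumption *)
  (HHsym : forall k, (H k)^T = H k)
  (HHbd : forall k u, norm2 (H k *m u) <= kH * norm2 u)
  (Hzeta : 0 < zeta)
  (HHcurv : forall k u, Jc (x k) *m u = 0 -> zeta * norm2 u ^+ 2 <= quad (H k) u)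
  (* inputs of Algorithm 3 *)
  (Htau0 : 0 < tau_m1) (Heps : 0 < eps < 1) (Hsigma : 0 < sigma < 1)
  (Hxi0 : 0 < xi_m1) (Hbeta : forall k, 0 < beta k <= 1) (Htheta : 0 <= theta)
  (* iterations of Algorithm 3 (gb k is the stochastic gradient realization) *)
  (Hsys : forall k, H k *m db k + (Jc (x k))^T *m yb k = - gb k /\
                    Jc (x k) *m db k = - c (x k))
  (Hdb0 : forall k, db k != 0)
  (Htau : forall k, taub k =
     tau_update eps sigma (if k is k'.+1 then taub k' else tau_m1)
       (c (x k)) (gb k) (H k) (db k))
  (Hxi : forall k, xib k =
     xi_update eps (if k is k'.+1 then xib k' else xi_m1)
       (dq c (x k) (taub k) (gb k) (H k) (db k) / (taub k * norm2 (db k) ^+ 2)))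
  (Halpha : forall k, alphab k =
     step_size c L (\sum_i gam i) theta (beta k) (taub k) (xib k)
       (x k) (gb k) (H k) (db k))
  (Hx : forall k, x k.+1 = x k + alphab k *: db k)
  (* deterministic counterpart *)
  (Hdet : forall k, H k *m d k + (Jc (x k))^T *m y k = - gradf (x k) /\
                    Jc (x k) *m d k = - c (x k))
  (* choice of beta *)
  (Hbetac : forall k,
     0 < beta k * xib k * taub k / (taub k * L + \sum_i gam i) <= 1) :
  forall k,
    merit f c (x k + alphab k *: db k) (taub k) - merit f c (x k) (taub k)
    <= - alphab k * dq c (x k) (taub k) (gradf (x k)) (H k) (d k)
       + 2^-1 * alphab k * beta k * dq c (x k) (taub k) (gb k) (H k) (db k)
       + alphab k * taub k * dotv (gradf (x k)) (db k - d k).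

Proof.
have [e0 e1] := andP Heps; have [s0 s1] := andP Hsigma.
have tau0 : forall j, 0 <= taub j.
  elim=> [|j IH]; rewrite Htau.
    exact: (proj1 (@tau_prop R n m eps sigma _ _ _ _ _ (ltW Htau0) Heps Hsigma)).
  exact: (proj1 (@tau_prop R n m eps sigma _ _ _ _ _ IH Heps Hsigma)).
have tden : forall j, taub j * (dotv (gb j) (db j) + Num.max (quad (H j) (db j)) 0)
    <= (1 - sigma) * norm1 (c (x j)).
  move=> j; rewrite Htau.
  have p0 : 0 <= (if j is j'.+1 then taub j' else tau_m1) by case: j => [|j]; [exact: ltW|].
  exact: (proj2 (@tau_prop R n m eps sigma _ _ _ _ _ p0 Heps Hsigma)).
have M0 : forall (Hm : 'M[R]_n) v, 0 <= Num.max (quad Hm v) 0.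
  by move=> Hm v; rewrite le_max lexx orbT.
have dqb0 : forall j, 0 <= dq c (x j) (taub j) (gb j) (H j) (db j).
  move=> j; rewrite /dq; have := tden j; have := tau0 j; have := M0 (H j) (db j).
  have := norm1_ge0 _ _ (c (x j)).
  set M := Num.max _ _; set gd := dotv _ _; set C := norm1 _; set t := taub j.
  move=> C0 Mp tp h; have : 0 <= t * M by apply: mulr_ge0.
  have : 0 <= sigma * C by apply: mulr_ge0 => //; exact: ltW.
  lra.
have N0 : forall j, 0 < norm2 (db j) ^+ 2.
  by move=> j; rewrite norm2_sq; apply: dotv_gt0; exact: Hdb0.
have tr0 : forall j, 0 <= dq c (x j) (taub j) (gb j) (H j) (db j) / (taub j * norm2 (db j) ^+ 2).
  move=> j; apply: divr_ge0; first exact: dqb0.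
  apply: mulr_ge0; [exact: tau0 | exact: ltW (N0 j)].
have xi0 : forall j, 0 <= xib j /\ xib j <= dq c (x j) (taub j) (gb j) (H j) (db j) / (taub j * norm2 (db j) ^+ 2).
  elim=> [|j IH]; rewrite Hxi; apply: xi_prop => //; [exact: ltW | exact: IH.1].
move=> k.
have [xk0 xitr] := xi0 k.
have tk0 := tau0 k.
have Np := N0 k.
have Cn0 := norm1_ge0 _ _ (c (x k)).
have dqb0k := dqb0 k.
have [a0 a1] := andP (Hbetac k).
have [b0 b1] := andP (Hbeta k).
set s := taub k * L + \sum_i gam i in a0 a1 *.
set N := norm2 (db k) ^+ 2 in Np xitr *.
set dqb := dq c (x k) (taub k) (gb k) (H k) (db k) in dqb0k xitr *.
set Cn := norm1 (c (x k)) in Cn0 *.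
have sp : 0 < s.
  rewrite ltNge; apply/negP => sle.
  move: a0; rewrite ltNge => /negP; apply.
  apply: mulr_ge0_le0; last by rewrite invr_le0.
  by apply: mulr_ge0 => //; apply: mulr_ge0 => //; exact: ltW.
have tp : 0 < taub k.
  rewrite lt_neqAle tk0 andbT; apply/eqP => t0'.
  by move: a0; rewrite -t0' mulr0 mul0r ltxx.
have aD : beta k * xib k * taub k / s * (s * N) <= beta k * dqb.
  have tN : 0 < taub k * N by apply: mulr_gt0.
  rewrite ler_pdivlMr // in xitr.
  have -> : beta k * xib k * taub k / s * (s * N) = beta k * (xib k * (taub k * N)).
    by field; rewrite gt_eqF.
  by apply: ler_wpM2l => //; exact: ltW.
have D0 : 0 < s * N by apply: mulr_gt0.
have key : 0 < alphab k /\
   ((alphab k <= 1 /\ alphab k * (s * N) <= beta k * dqb) \/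
    (1 < alphab k /\ alphab k * (s * N) <= beta k * dqb - 4 * Cn)).
  rewrite Halpha /step_size /= -/s -/N -/dqb -/Cn.
  set a := beta k * xib k * taub k / s in a0 a1 aD *.
  set hi := a + theta * beta k ^+ 2.
  have ahi : a <= hi by rewrite /hi lerDl; apply: mulr_ge0 => //; exact: sqr_ge0.
  set ah := beta k * dqb / (s * N).
  set atl := ah - 4 * Cn / (s * N).
  have aah : a <= ah by rewrite /ah ler_pdivlMr.
  have ahE : ah * (s * N) = beta k * dqb by rewrite /ah divfK // gt_eqF.
  have atE : atl * (s * N) = beta k * dqb - 4 * Cn.
    by rewrite /atl mulrBl ahE divfK // gt_eqF.
  have [plo1 phi1] := proj_prop _ _ _ ah ahi.
  have [plo2 phi2] := proj_prop _ _ _ atl ahi.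
  have mx : Num.max ah a = ah by apply/max_idPl.
  rewrite mx in phi1.
  case: ifP => h1.
    split; first exact: lt_le_trans a0 plo1.
    left; split; first exact: ltW.
    by rewrite -ahE; apply: ler_wpM2r => //; exact: ltW.
  have h1' : 1 <= ah by apply: le_trans phi1; rewrite leNgt h1.
  case: ifP => h2.
    split; first exact: ltr01.
    by left; split => //; rewrite mul1r -ahE -{1}(mul1r (s * N)); apply: ler_wpM2r => //; exact: ltW.
  have h2' : 1 < proj_int a hi atl by rewrite ltNge h2.
  split; first exact: lt_trans ltr01 h2'.
  right; split => //.
  have : proj_int a hi atl <= atl.
    move: phi2; rewrite le_max => /orP[] // hle.
    by move: h2'; rewrite ltNge (le_trans hle a1).
  by move=> hle; rewrite -atE; apply: ler_wpM2r => //; exact: ltW.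
have [ap kcase] := key.
have Xy : X (x k + alphab k *: db k) by rewrite -Hx.
have seg := seg_in _ _ X (x k) (db k) (alphab k) HXconv (HXit k) Xy ap.
have hf := descent _ _ X f gradf L (x k) (db k) (alphab k) Hfdiff HgL seg (ltW ap).
have hc : forall i, `|c (x k + alphab k *: db k) i 0 - c (x k) i 0 -
     alphab k * dotv (row i (Jc (x k)))^T (db k)| <= gam i / 2 * alphab k ^+ 2 * N.
  move=> i; apply: (descent _ _ X (fun w => c w i 0) (fun z => (row i (Jc z))^T) (gam i)) => //.
  - move=> z Xz; have [dz dze] := Hcdiff i z Xz; split => // v; by rewrite dze dotv_row.
  - by move=> z w Xz Xw; have := HcL i z w Xz Xw; rewrite linearB.
  - exact: ltW.
have Jd : forall i, dotv (row i (Jc (x k)))^T (db k) = - c (x k) i 0.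
  by move=> i; rewrite dotv_row (proj2 (Hsys k)) mxE.
have hn1 : norm1 (c (x k + alphab k *: db k)) <=
    `|1 - alphab k| * Cn + (\sum_i gam i) / 2 * alphab k ^+ 2 * N.
  rewrite /Cn /norm1 mulr_sumr !mulr_suml -big_split /=; apply: ler_sum => i _.
  have := hc i; rewrite Jd.
  set w := c (x k + alphab k *: db k) i 0; set ci := c (x k) i 0.
  move=> h.
  have e : w = (1 - alphab k) * ci + (w - ci - alphab k * - ci) by ring.
  rewrite {1}e; apply: le_trans (ler_normD _ _) _; rewrite normrM; exact: lerD.
rewrite /merit /dq dotvBr -/Cn.
have Md := M0 (H k) (d k).
have aM : 0 <= alphab k * taub k * Num.max (quad (H k) (d k)) 0.
  by apply: mulr_ge0 => //; apply: mulr_ge0 => //; exact: ltW.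
have hfu : f (x k + alphab k *: db k) - f (x k) <=
    alphab k * dotv (gradf (x k)) (db k) + L / 2 * alphab k ^+ 2 * N.
  move: hf; rewrite -/N ler_norml => /andP[_ h]; lra.
have T1 := ler_wpM2l tk0 hfu.
have E : alphab k / 2 * (alphab k * (s * N)) =
    taub k * (L / 2 * alphab k ^+ 2 * N) + (\sum_i gam i) / 2 * alphab k ^+ 2 * N.
  by rewrite /s; ring.
have ah0 : 0 <= alphab k / 2 by apply: divr_ge0 => //; exact: ltW.
case: kcase => [[a1' aD'] | [a1' aD']].
  rewrite ger0_norm ?subr_ge0 // in hn1.
  have := ler_wpM2l ah0 aD'; rewrite E => h.
  lra.
rewrite ltr0_norm ?subr_lt0 // in hn1.
have := ler_wpM2l ah0 aD'; rewrite E => h.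
have : 0 <= alphab k * Cn by apply: mulr_ge0 => //; exact: ltW.
lra.
Qed.
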